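(* Let $H$ be a separable infinite-dimensional complex Hilbert space and $T\in\mathcal{L}(H)$. (i) If $S\in\mathcal{L}(H)$ commutes with $T$, then $(T,ST)$ is not a universal commuting pair. In particular, $(T,p(T)T)$ is not a universal commuting pair for any complex polynomial $p(z)=a_1z+\dots+a_nz^n$ with $p(0)=0$, where $p(T)=a_1T+\dots+a_nT^n$. (ii) $(T^m,T^n)$ is not a universal commuting pair for any $m,n\in\mathbb{N}$.
   Context: A commuting pair $(U_1,U_2)\in\mathcal{L}(H)^2$ is a universal commuting pair if for every commuting pair $(S_1,S_2)\in\mathcal{L}(H)^2$ there exist a constant $c\neq0$, a closed subspace $M\subset H$ invariant under both $U_1$ and $U_2$, and a linear isomorphism $V:H\to M$ such that $U_1V=cVS_1$ and $U_2V=cVS_2$. *)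

(* Defs.v *)
From HB Require Import structures.
From mathcomp Require Import all_boot all_order all_algebra.
From mathcomp Require Import complex.
From mathcomp Require Import reals.
Set Implicit Arguments. Unset Strict Implicit. Unset Printing Implicit Defensive.
Import Order.TTheory GRing.Theory Num.Theory.
Local Open Scope ring_scope.

Section Hilbert.
Variable R : realType.
Local Notation C := R[i].
Variable H : lmodType C.
Variable ip : H -> H -> C.

Definition is_inner_product : Prop :=
  [/\ forall (a : C) (x y z : H), ip (a *: x + y) z = a * ip x z + ip y z,
      forall x y : H, ip y x = (ip x y)^*,
      forall x : H, 0 <= ip x x
    & forall x : H, ip x x = 0 -> x = 0].

Definition hnorm (x : H) : R := Num.sqrt (complex.Re (ip x x)).

Definition converges_to (u : nat -> H) (l : H) : Prop :=
  forall e : R, 0 < e -> exists N : nat, forall n, (N <= n)%N -> hnorm (u n - l) < e.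

Definition cauchy_seq (u : nat -> H) : Prop :=
  forall e : R, 0 < e -> exists N : nat,
    forall m n, (N <= m)%N -> (N <= n)%N -> hnorm (u m - u n) < e.

Definition complete : Prop :=
  forall u : nat -> H, cauchy_seq u -> exists l, converges_to u l.

Definition is_hilbert : Prop := is_inner_product /\ complete.

Definition separable : Prop :=
  exists d : nat -> H, forall (x : H) (e : R), 0 < e -> exists n, hnorm (x - d n) < e.

Definition infinite_dimensional : Prop :=
  forall n : nat, exists f : 'I_n -> H,
    forall c : 'I_n -> C, \sum_(i < n) c i *: f i = 0 -> forall i, c i = 0.

Definition bounded_op (T : H -> H) : Prop :=
  (forall (a : C) (x y : H), T (a *: x + y) = a *: T x + T y) /\
  exists K : R, forall x, hnorm (T x) <= K * hnorm x.

Definition closed_subspace (M : H -> Prop) : Prop :=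
  [/\ M 0,
      forall (a : C) (x y : H), M x -> M y -> M (a *: x + y)
    & forall (u : nat -> H) (l : H), (forall n, M (u n)) -> converges_to u l -> M l].

Definition commuting_pair (T1 T2 : H -> H) : Prop :=
  bounded_op T1 /\ bounded_op T2 /\ forall x, T1 (T2 x) = T2 (T1 x).

(* V : H -> M is a linear isomorphism onto M (bounded, with bounded inverse) *)
Definition lin_iso_onto (V : H -> H) (M : H -> Prop) : Prop :=
  [/\ bounded_op V,
      forall x, M (V x),
      forall y, M y -> exists x, V x = y
    & exists K : R, forall x, hnorm x <= K * hnorm (V x)].

Definition universal_commuting_pair (U1 U2 : H -> H) : Prop :=
  commuting_pair U1 U2 /\
  forall S1 S2 : H -> H, commuting_pair S1 S2 ->
    exists (c : C) (M : H -> Prop) (V : H -> H),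
      [/\ c != 0, closed_subspace M,
          (forall x, M x -> M (U1 x)) /\ (forall x, M x -> M (U2 x)),
          lin_iso_onto V M
        & (forall x, U1 (V x) = c *: V (S1 x)) /\ (forall x, U2 (V x) = c *: V (S2 x))].

Definition poly_op (p : {poly C}) (T : H -> H) (x : H) : H :=
  \sum_(i < size p) p`_i *: iter i T x.

End Hilbert.

(* Main.v *)
Require Import Defs.
From HB Require Import structures.
From mathcomp Require Import all_boot all_order all_algebra.
From mathcomp Require Import complex.
From mathcomp Require Import reals.
Import Order.TTheory GRing.Theory Num.Theory.
Local Open Scope ring_scope.
Set Implicit Arguments.
Section S.
Variable R : realType.
Variable H : lmodType R[i].
Variable ip : H -> H -> R[i].
Hypothesis hH : is_hilbert ip.
Hypothesis hinf : infinite_dimensional H.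

Lemma lin0 {f : H -> H} : (forall (a : R[i]) x y, f (a*:x+y) = a*:f x + f y) -> f 0 = 0.
Proof. move=> hf; have := hf (-1) 0 0. by rewrite scaler0 addr0 scaleN1r addNr. Qed.

Lemma ip0 z : ip 0 z = 0.
Proof.
case: hH => -[hl _ _ _] _; have := hl 1 0 0 z.
rewrite scaler0 addr0 mul1r => h; apply/(addrI (ip 0 z)); rewrite addr0; exact/esym.
Qed.

Lemma hnorm0 : hnorm ip 0 = 0.
Proof. by rewrite /hnorm ip0 /= sqrtr0. Qed.

Lemma bounded0 : bounded_op ip (fun _ => 0).
Proof.
split; first by move=> *; rewrite scaler0 addr0.
by exists 0 => x; rewrite mul0r hnorm0.
Qed.

Lemma boundedid : bounded_op ip id.
Proof. by split=> //; exists 1 => x; rewrite mul1r. Qed.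

Lemma nontriv : exists f : H, f <> 0.
Proof.
have [f hf] := hinf 1; exists (f ord0) => h0.
have := hf (fun _ => 1); rewrite big_ord1 scale1r => /(_ h0 ord0) /eqP.
by rewrite oner_eq0.
Qed.

Lemma not_univ U1 U2 S1 S2 :
 commuting_pair ip S1 S2 ->
 (forall V : H -> H, (forall (a : R[i]) x y, V (a*:x+y) = a*:V x + V y) -> forall c : R[i], c != 0 ->
   (forall x, U1 (V x) = c *: V (S1 x)) -> (forall x, U2 (V x) = c *: V (S2 x)) -> forall x, V x = 0) ->
 ~ universal_commuting_pair ip U1 U2.
Proof.
move=> hS hV [_ /(_ S1 S2 hS) [c [M [V [c0 _ _ [[hlin _] _ _ [K hK]] [h1 h2]]]]]].
have V0 := hV V hlin c c0 h1 h2.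
have [f hf] := nontriv; apply: hf.
have := hK f; rewrite V0 hnorm0 mulr0 /hnorm.
have [[_ _ hpos hdef] _] := hH.
move=> h; have /eqP : Num.sqrt (complex.Re (ip f f)) = 0 by apply/le_anti; rewrite h sqrtr_ge0.
rewrite sqrtr_eq0 => hre; apply: hdef.
move: (hpos f) hre; case: (ip f f) => a b.
rewrite lecE /= => /andP [/eqP hb0 ha] hb.
by apply/eqP; rewrite eq_complex /= hb0 eqxx andbT eq_le ha hb.
Qed.

Lemma res01 U1 U2 : (forall x, U1 x = 0 -> U2 x = 0) -> ~ universal_commuting_pair ip U1 U2.
Proof.
move=> hU; apply: (@not_univ U1 U2 (fun _ => 0) id).
  by split; [exact: bounded0 | split; [exact: boundedid|]].
move=> V hl c c0 h1 h2 x; have V0 := lin0 hl.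
have := h2 x; rewrite hU; last by rewrite h1 V0 scaler0.
by move/esym/eqP; rewrite scaler_eq0 (negPf c0) => /eqP.
Qed.

Lemma res10 U1 U2 : (forall x, U2 x = 0 -> U1 x = 0) -> ~ universal_commuting_pair ip U1 U2.
Proof.
move=> hU; apply: (@not_univ U1 U2 id (fun _ => 0)).
  by split; [exact: boundedid | split; [exact: bounded0|]].
move=> V hl c c0 h1 h2 x; have V0 := lin0 hl.
have := h1 x; rewrite hU; last by rewrite h2 V0 scaler0.
by move/esym/eqP; rewrite scaler_eq0 (negPf c0) => /eqP.
Qed.

Lemma iter_0 (T : H -> H) i : T 0 = 0 -> iter i T 0 = 0.
Proof. by move=> h; elim: i => //= i ->. Qed.

End S.

Theorem proposition4p1 (R : realType) (H : lmodType R[i]) (ip : H -> H -> R[i])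
  (hH : is_hilbert ip) (hsep : separable ip) (hinf : infinite_dimensional H)
  (T : H -> H) (hT : bounded_op ip T) :
  (* (i) *)
  (forall S : H -> H, bounded_op ip S -> (forall x, S (T x) = T (S x)) ->
     ~ universal_commuting_pair ip T (fun x => S (T x)))
  /\ (forall p : {poly R[i]}, p.[0] = 0 ->
     ~ universal_commuting_pair ip T (fun x => poly_op p T (T x))
     /\ ~ universal_commuting_pair ip T (poly_op p T))
  (* (ii) *)
  /\ (forall m n : nat, (0 < m)%N -> (0 < n)%N ->
     ~ universal_commuting_pair ip (iter m T) (iter n T)).
Proof.
have T0 := @lin0 _ _ _ hT.1.
have pz y : T y = 0 -> forall p : {poly R[i]}, p.[0] = 0 -> poly_op p T y = 0.
  move=> hy p hp; rewrite /poly_op big1 // => -[[|i] hi] _ /=.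
    by rewrite -horner_coef0 hp scale0r.
  by rewrite -iterS iterSr hy iter_0 // scaler0.
have pz0 p : poly_op p T 0 = 0.
  by rewrite /poly_op big1 // => i _; rewrite iter_0 // scaler0.
split; [|split].
- move=> S hS _; apply: (res01 hH hinf) => x ->; exact: (@lin0 _ _ _ hS.1).
- move=> p hp; split; apply: (res01 hH hinf) => x hx.
    by rewrite hx pz0.
  exact: pz.
- move=> m n _ _; case: (leqP m n) => hmn.
    apply: (res01 hH hinf) => x hx.
    by rewrite -(subnK hmn) iterD hx iter_0.
  apply: (res10 hH hinf) => x hx.
  by rewrite -(subnK (ltnW hmn)) iterD hx iter_0.
Qed.
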